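(* Let $\mathcal L$ be an expansion of the language of ordered groups and let $G$ be an $\mathcal L$-structure whose reduct is a densely ordered abelian group. If $G$ satisfies the scheme DCI, then the group $G$ is divisible.
   Context: For an $\mathcal L$-formula $\varphi(v,\bar w)$, $\mathrm{DCI}_\varphi$ is the sentence $\forall\bar w\Big(\big(\exists s\,\forall v<s\,\varphi(v,\bar w)\ \wedge\ \forall v\big(\forall s<v\,\varphi(s,\bar w)\to\exists u>v\,\forall s<u\,\varphi(s,\bar w)\big)\big)\to\forall v\,\varphi(v,\bar w)\Big)$, and DCI is the scheme $\{\mathrm{DCI}_\varphi:\varphi(v,\bar w)\text{ an }\mathcal L\text{-formula}\}$. Divisible means: for every $g\in G$ and integer $n\ge1$ there is $h\in G$ with $nh=g$. *)

(* Defs.v *)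
From mathcomp Require Import all_boot.
Set Implicit Arguments. Unset Strict Implicit. Unset Printing Implicit Defensive.

Record DOAG := {
  car :> Type;
  gzero : car;
  gadd : car -> car -> car;
  gopp : car -> car;
  glt : car -> car -> Prop;
  gaddA : forall x y z, gadd x (gadd y z) = gadd (gadd x y) z;
  gaddC : forall x y, gadd x y = gadd y x;
  gadd0 : forall x, gadd gzero x = x;
  gaddN : forall x, gadd (gopp x) x = gzero;
  glt_irr : forall x, ~ glt x x;
  glt_trans : forall x y z, glt x y -> glt y z -> glt x z;
  glt_total : forall x y, glt x y \/ x = y \/ glt y x;
  glt_add : forall x y z, glt x y -> glt (gadd x z) (gadd y z);
  glt_dense : forall x y, glt x y -> exists z, glt x z /\ glt z y
}.

Fixpoint gnmul (G : DOAG) (n : nat) (g : G) : G :=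
  match n with 0 => gzero G | S k => gadd g (gnmul k g) end.

Definition divisible (G : DOAG) : Prop :=
  forall (g : G) (n : nat), (1 <= n)%coq_nat -> exists h : G, gnmul n h = g.

(* Extra symbols of an expansion L of the language {0,+,-,<} of ordered groups
   (constants are 0-ary function symbols). *)
Record signature := {
  fsym : Type; farity : fsym -> nat;
  rsym : Type; rarity : rsym -> nat
}.

Record Lstructure (L : signature) := {
  grp :> DOAG;
  fint : forall f : fsym L, ('I_(farity f) -> grp) -> grp;
  rint : forall r : rsym L, ('I_(rarity r) -> grp) -> Prop
}.

Inductive term (L : signature) : Type :=
| tvar : nat -> term L
| tzero : term L
| tadd : term L -> term L -> term L
| topp : term L -> term L
| tapp : forall f : fsym L, ('I_(farity f) -> term L) -> term L.

Inductive formula (L : signature) : Type :=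
| fbot : formula L
| feq : term L -> term L -> formula L
| flt : term L -> term L -> formula L
| frel : forall r : rsym L, ('I_(rarity r) -> term L) -> formula L
| fnot : formula L -> formula L
| fand : formula L -> formula L -> formula L
| f_or : formula L -> formula L -> formula L
| fimp : formula L -> formula L -> formula L
| fall : nat -> formula L -> formula L
| fex : nat -> formula L -> formula L.

Definition upd (T : Type) (e : nat -> T) (n : nat) (x : T) : nat -> T :=
  fun m => if Nat.eqb m n then x else e m.

Fixpoint teval (L : signature) (M : Lstructure L) (e : nat -> M) (t : term L) : M :=
  match t with
  | tvar n => e n
  | tzero => gzero M
  | tadd a b => gadd (teval e a) (teval e b)
  | topp a => gopp (teval e a)
  | tapp f args => @fint L M f (fun i => teval e (args i))
  end.

Fixpoint sat (L : signature) (M : Lstructure L) (e : nat -> M) (p : formula L) : Prop :=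
  match p with
  | fbot => False
  | feq a b => teval e a = teval e b
  | flt a b => glt (teval e a) (teval e b)
  | frel r args => @rint L M r (fun i => teval e (args i))
  | fnot q => ~ sat e q
  | fand q r => sat e q /\ sat e r
  | f_or q r => sat e q \/ sat e r
  | fimp q r => sat e q -> sat e r
  | fall n q => forall x : M, sat (upd e n x) q
  | fex n q => exists x : M, sat (upd e n x) q
  end.

(* M |= DCI_phi, where v is (the index of) the distinguished variable of phi and
   the parameters w are all remaining variables (quantified via the environment e). *)
Definition DCI_holds (L : signature) (M : Lstructure L) (phi : formula L) (v : nat) : Prop :=
  forall e : nat -> M,
    let P := fun x : M => sat (upd e v x) phi in
    ((exists s : M, forall x : M, glt x s -> P x) /\
     (forall x : M, (forall s : M, glt s x -> P s) ->
        exists u : M, glt x u /\ forall s : M, glt s u -> P s)) ->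
    forall x : M, P x.

Definition satisfies_DCI (L : signature) (M : Lstructure L) : Prop :=
  forall (phi : formula L) (v : nat), DCI_holds M phi v.

(* Main.v *)
Require Import Defs.
From Stdlib Require Import Classical.
From mathcomp Require Import all_boot.

Section G.
Variable G : DOAG.
Local Notation "x + y" := (gadd x y).
Local Notation "- x" := (gopp x).
Local Notation "0" := (gzero G).
Local Notation "x < y" := (glt x y).

Lemma addr0 (x : G) : x + 0 = x.
Proof. rewrite gaddC; apply gadd0. Qed.
Lemma addrN (x : G) : x + - x = 0.
Proof. rewrite gaddC; apply gaddN. Qed.
Lemma addrK (x y : G) : (x + y) + - y = x.
Proof. rewrite -gaddA addrN addr0. done. Qed.
Lemma addNK (x y : G) : (x + - y) + y = x.
Proof. rewrite -gaddA gaddN addr0. done. Qed.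
Lemma ltr_add (x y z : G) : x < y -> z + x < z + y.
Proof. move=> h; rewrite (gaddC z x) (gaddC z y); apply glt_add; done. Qed.
Lemma lt_add2 (a b c d : G) : a < b -> c < d -> a + c < b + d.
Proof. move=> h1 h2; apply glt_trans with (b + c); [apply glt_add; done| apply ltr_add; done]. Qed.
Lemma lt_cancel (x y z : G) : x + z < y + z -> x < y.
Proof. move=> h; have := glt_add (- z) h; rewrite !addrK; done. Qed.
Lemma lt_irr' (x y : G) : x < y -> y < x -> False.
Proof. move=> h1 h2; exact: (glt_irr (glt_trans h1 h2)). Qed.

Lemma nmul_lt n (x y : G) : x < y -> gnmul (S n) x < gnmul (S n) y.
Proof.
move=> h; elim: n => [|n IH] /=.
- rewrite !addr0; done.
- apply lt_add2; done.
Qed.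

Lemma nmul_add n (x y : G) : gnmul n (x + y) = gnmul n x + gnmul n y.
Proof.
elim: n => [|n IH] /=; first by rewrite gadd0.
rewrite IH -!gaddA; congr (gadd x _).
rewrite !gaddA (gaddC y (gnmul n x)); done.
Qed.

Lemma nmul0 n : gnmul n (gzero G) = 0.
Proof. elim: n => [|n IH] //=; rewrite IH gadd0; done. Qed.

Lemma nmul_nonneg k (e : G) : 0 < e \/ 0 = e -> 0 < gnmul k e \/ 0 = gnmul k e.
Proof.
move=> he; elim: k => [|k IH] /=; first by right.
case: he => he; case: IH => IH.
- left; rewrite -(gadd0 0); apply lt_add2; done.
- left; rewrite -IH addr0; done.
- left; rewrite -{1}he gadd0; done.
- right; rewrite -{1}he gadd0; done.
Qed.

Lemma nmul_nonpos k (e : G) : e < 0 \/ e = 0 -> gnmul k e < 0 \/ gnmul k e = 0.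
Proof.
move=> he; elim: k => [|k IH] /=; first by right.
case: he => he; case: IH => IH.
- left; rewrite -(gadd0 0); apply lt_add2; done.
- left; rewrite IH addr0; done.
- left; rewrite {1}he gadd0; done.
- right; rewrite {1}he gadd0; done.
Qed.

Lemma half (d : G) : 0 < d -> exists a, 0 < a /\ a + a < d.
Proof.
move=> hd; case: (glt_dense hd) => e1 [h1 h2].
set c := d + - e1.
have hc : 0 < c by have := glt_add (- e1) h2; rewrite addrN.
have hs : e1 + c = d by rewrite /c gaddC addNK.
case: (glt_total e1 c) => [lt|[eq|lt]].
- case: (glt_dense h1) => a [ha1 ha2]; exists a; split => //.
  rewrite -hs; apply glt_trans with (e1 + e1); first by apply lt_add2.
  apply ltr_add; done.
- case: (glt_dense h1) => a [ha1 ha2]; exists a; split => //.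
  rewrite -hs -eq; apply lt_add2; done.
- case: (glt_dense hc) => a [ha1 ha2]; exists a; split => //.
  rewrite -hs gaddC; apply glt_trans with (c + c); first by apply lt_add2.
  apply ltr_add; done.
Qed.

Lemma small n : forall d : G, 0 < d -> exists e, 0 < e /\ gnmul (S n) e < d.
Proof.
elim: n => [|n IH] d hd.
- case: (glt_dense hd) => e [h1 h2]; exists e; split => //=; rewrite addr0; done.
- case: (half d hd) => a [ha1 ha2].
  case: (IH a ha1) => e [he1 he2].
  have [e2 [h1 [h2 h3]]] : exists e2, 0 < e2 /\ e2 < a /\ gnmul (S n) e2 < a.
    case: (glt_total e a) => [lt|[eq|lt]].
    + exists e; done.
    + case: (glt_dense ha1) => e2 [h1 h2]; exists e2; split => //; split => //.
      apply glt_trans with (gnmul (S n) e) => //; apply nmul_lt; rewrite eq; done.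
    + case: (glt_dense ha1) => e2 [h1 h2]; exists e2; split => //; split => //.
      apply glt_trans with (gnmul (S n) e) => //; apply nmul_lt;
      apply glt_trans with a; done.
  exists e2; split => //.
  change (gnmul (S (S n)) e2) with (e2 + gnmul (S n) e2).
  apply glt_trans with (a + a) => //; apply lt_add2; done.
Qed.
End G.
Arguments addr0 {G}. Arguments addrN {G}. Arguments addrK {G}. Arguments addNK {G}. Arguments ltr_add {G}. Arguments lt_add2 {G}. Arguments lt_cancel {G}. Arguments lt_irr' {G}. Arguments nmul_lt {G}. Arguments nmul_add {G}. Arguments nmul0 {G}. Arguments nmul_nonneg {G}. Arguments nmul_nonpos {G}. Arguments half {G}. Arguments small {G}.

Fixpoint tmul (L : signature) (k : nat) (t : term L) : term L :=
  match k with 0 => tzero L | S k => tadd t (tmul L k t) end.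

Lemma teval_tmul (L : signature) (M : Lstructure L) (e : nat -> M) k (t : term L) :
  teval e (tmul L k t) = gnmul k (teval e t).
Proof. elim: k => [|k IH] //=; rewrite IH; done. Qed.

Theorem corollary3p3 (L : signature) (M : Lstructure L) :
  satisfies_DCI M -> divisible (grp M).
Proof.
move=> hD g n hn.
case: n hn => [|m] hn; first by inversion hn.
apply NNPP => hne.
have H : forall h : M, gnmul (S m) h <> g by move=> h eq; apply hne; exists h.
set phi := flt (tmul L (S m) (tvar L 0)) (tvar L 1).
have := hD phi 0 (fun _ => g).
have hP : forall x : M, sat (upd (fun _ : nat => g) 0 x) phi <-> glt (gnmul (S m) x) g.
  move=> x; rewrite /phi /= teval_tmul /=; done.
move=> hDCI.
have concl : forall x : M, glt (gnmul (S m) x) g.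
  move=> x; apply hP; apply hDCI; split.
  -
    case: (glt_total (gzero M) g) => [gp|[g0|gn]].
    + exists (gzero M) => y hy; apply hP.
      apply glt_trans with (gnmul (S m) (gzero M)); first by apply nmul_lt.
      rewrite nmul0; done.
    + exists (gzero M) => y hy; apply hP.
      have := nmul_lt m _ _ hy; rewrite nmul0 g0; done.
    + exists g => y hy; apply hP.
      apply glt_trans with (gnmul (S m) g); first by apply nmul_lt.
      change (gnmul (S m) g) with (gadd g (gnmul m g)).
      case: (nmul_nonpos m _ (or_introl gn)) => h'.
      * by have := ltr_add _ _ g h'; rewrite addr0.
      * exfalso; apply (H g); rewrite /= h' addr0; done.
  - move=> x0 A.
    case: (glt_total (gnmul (S m) x0) g) => [lt|[eq|gt]].
    + set d := gadd g (gopp (gnmul (S m) x0)).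
      have hd : glt (gzero M) d by have := glt_add (gopp (gnmul (S m) x0)) lt; rewrite addrN.
      case: (small m _ hd) => e [he1 he2].
      exists (gadd x0 e); split.
      * by have := ltr_add _ _ x0 he1; rewrite addr0.
      * move=> s hs; apply hP.
        apply glt_trans with (gnmul (S m) (gadd x0 e)); first by apply nmul_lt.
        rewrite nmul_add.
        have : glt (gadd (gnmul (S m) x0) (gnmul (S m) e)) (gadd (gnmul (S m) x0) d)
          by apply ltr_add.
        rewrite /d (gaddC g) gaddA addrN gadd0; done.
    + exfalso; exact: (H x0 eq).
    + exfalso.
      set d := gadd (gnmul (S m) x0) (gopp g).
      have hd : glt (gzero M) d by have := glt_add (gopp g) gt; rewrite addrN.
      case: (small m _ hd) => e [he1 he2].
      have hne2 : glt (gopp e) (gzero M).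
        have := glt_add (gopp e) he1; rewrite gadd0 addrN; done.
      have hs : glt (gadd x0 (gopp e)) x0.
        by have := ltr_add _ _ x0 hne2; rewrite addr0.
      have := A _ hs; move/hP => hs2.
      have : glt (gadd (gnmul (S m) (gadd x0 (gopp e))) (gnmul (S m) e)) (gadd g d)
        by apply lt_add2.
      rewrite -nmul_add addNK /d (gaddC (gnmul (S m) x0)) gaddA addrN gadd0.
      apply glt_irr.
case: (glt_total (gzero M) g) => [gp|[g0|gn]].
- have := concl g.
  change (gnmul (S m) g) with (gadd g (gnmul m g)).
  case: (nmul_nonneg m _ (or_introl gp)) => h' hh.
  + apply (lt_irr' _ _ hh); by have := ltr_add _ _ g h'; rewrite addr0.
  + rewrite -h' addr0 in hh; exact: glt_irr hh.
- have := concl g; rewrite -g0 nmul0; apply glt_irr.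
- have := concl (gzero M); rewrite nmul0 => h; exact: lt_irr' _ _ h gn.
Qed.
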